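(* Let $(G,\omega)$ be a weighted graph with $n$ vertices and total weight $N=\sum_{v\in V(G)}\omega(v)$. Then $\tau_{(G,\omega)}=(x-1)^{N-n}\tau_G$, where $\tau_G$ is the tree polynomial of the underlying unweighted graph $G$; moreover $\tau_G(1)\ne0$, so the largest integer $k$ with $(x-1)^k\mid\tau_{(G,\omega)}$ is $k=N-n$ (the excess weight).
   Context: A weighted graph $(G,\omega)$ is a finite simple graph with $\omega:V(G)\to\{1,2,\dots\}$, and $X_{(G,\omega)}=\sum_\kappa\prod_{v}x_{\kappa(v)}^{\omega(v)}$ over proper colourings $\kappa:V(G)\to\{1,2,\dots\}$; the unweighted $X_G$ is the case $\omega\equiv1$. $P_\lambda$ is the disjoint union of paths with $\lambda_1,\dots,\lambda_{\ell(\lambda)}$ vertices; $\{X_{P_\lambda}\}$ is a basis of the symmetric functions over $\mathbb{Q}$. For $f=\sum_\lambda a_\lambda X_{P_\lambda}$, $\tau_f(x)=\sum_\lambda a_\lambda x^{\ell(\lambda)}$; $\tau_{(G,\omega)}=\tau_{X_{(G,\omega)}}$ and $\tau_G=\tau_{X_G}$. *)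

(* Defs.v *)
From HB Require Import structures.
From mathcomp Require Import all_boot all_order all_algebra.
From mathcomp Require Import mpoly.
From Stdlib Require Import ClassicalEpsilon.

Set Implicit Arguments.
Unset Strict Implicit.
Unset Printing Implicit Defensive.

Import GRing.Theory.
Local Open Scope ring_scope.

Definition simple_graph (V : finType) (e : rel V) : Prop :=
  ssrbool.symmetric e /\ ssrbool.irreflexive e.

(* Proper colourings with colours in 'I_M (colours 1..M shifted to 0..M-1). *)
Definition proper (V : finType) (e : rel V) (M : nat) (k : {ffun V -> 'I_M}) : bool :=
  [forall u, forall v, e u v ==> (k u != k v)].

(* Chromatic symmetric function of (G, w), truncated to M variables x_0..x_{M-1}. *)
Definition chromX (V : finType) (e : rel V) (w : V -> nat) (M : nat) : {mpoly rat[M]} :=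
  \sum_(k : {ffun V -> 'I_M} | proper e k) \prod_(v : V) 'X_(k v) ^+ w v.

Definition is_partition (d : nat) (la : seq nat) : bool :=
  sorted geq la && all (fun i => 0 < i)%N la && (sumn la == d).

(* The path forest P_la: vertices 0..|la|-1, blocks [s_i, s_{i+1}) with s_i the partial
   sums of la; j ~ j+1 iff j+1 is not a block boundary. *)
Definition psums (la : seq nat) : seq nat :=
  [seq sumn (take i la) | i <- iota 0 (size la).+1].

Definition path_rel (la : seq nat) : rel 'I_(sumn la) :=
  fun j k => ((k == j.+1 :> nat) || (j == k.+1 :> nat)) && (maxn j k \notin psums la).

Definition pathX (M : nat) (la : seq nat) : {mpoly rat[M]} :=
  chromX (@path_rel la) (fun _ => 1%N) M.

Definition path_expansion (d : nat) (f : {mpoly rat[d]}) (c : seq (seq nat * rat)) : Prop :=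
  all (is_partition d) (unzip1 c) /\ f = \sum_(p <- c) p.2 *: pathX d p.1.

(* tau_f(x) = sum_la a_la x^{l(la)}, for f homogeneous of degree d. *)
Definition tau (d : nat) (f : {mpoly rat[d]}) : {poly rat} :=
  match excluded_middle_informative (exists c, path_expansion f c) with
  | left h => let c := proj1_sig (constructive_indefinite_description _ h) in
              \sum_(p <- c) p.2 *: 'X^(size p.1)
  | right _ => 0
  end.

Definition total_weight (V : finType) (w : V -> nat) : nat := (\sum_(v : V) w v)%N.

Definition tau_w (V : finType) (e : rel V) (w : V -> nat) : {poly rat} :=
  tau (chromX e w (total_weight w)).

Definition tau_G (V : finType) (e : rel V) : {poly rat} :=
  tau (chromX e (fun _ => 1%N) #|V|).

(* Main.v *)
Set Warnings "-all".
Require Import Defs.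
From HB Require Import structures.
From mathcomp Require Import all_boot all_order all_algebra.
From mathcomp Require Import mpoly.
From mathcomp Require Import zify.
From mathcomp Require Import ring.
From Stdlib Require Import ClassicalEpsilon.
Set Implicit Arguments.
Unset Strict Implicit.
Unset Printing Implicit Defensive.
Import GRing.Theory.
Local Open Scope ring_scope.

Definition pw (M m : nat) : {mpoly rat[M]} := \sum_(i < M) 'X_i ^+ m.

Section Rho.
Variables (V : finType) (rho : V -> V).
Hypothesis rhoK : forall v, rho (rho v) = rho v.
Definition Rt := {r : V | rho r == r}.
Definition rhoS (v : V) : Rt := exist _ (rho v) (introT eqP (rhoK v)).

Lemma Gsum (w : V -> nat) (M : nat) :
  \sum_(k : {ffun V -> 'I_M} | [forall v, k v == k (rho v)]) \prod_v 'X_(k v) ^+ w v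
  = \prod_(r : Rt) pw M (\sum_(v | rho v == val r) w v).
Proof.
rewrite /pw bigA_distr_bigA.
pose h (g : {ffun Rt -> 'I_M}) : {ffun V -> 'I_M} := [ffun v => g (rhoS v)].
pose h' (k : {ffun V -> 'I_M}) : {ffun Rt -> 'I_M} := [ffun r => k (val r)].
rewrite (reindex_onto h h').
  apply: eq_big => [g|g _].
    apply/andP; split.
      apply/forallP => v; rewrite !ffunE; apply/eqP; congr (g _); apply: val_inj => /=.
      by rewrite rhoK.
    apply/eqP/ffunP => r; rewrite !ffunE; congr (g _); apply: val_inj => /=.
    exact/eqP/(valP r).
  rewrite (partition_big rhoS xpredT) //=.
  apply: eq_bigr => r _.
  rewrite -prodrXr; apply: eq_big => v.
    by rewrite -(inj_eq val_inj).
  by move=> /eqP <-; rewrite ffunE.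
move=> k /forallP Hk; apply/ffunP => v; rewrite !ffunE /=.
by rewrite (eqP (Hk v)).
Qed.
End Rho.


Lemma prod_bool (R : comNzRingType) (I : finType) (b : I -> bool) :
  \prod_(i : I) ((b i)%:R : R) = ([forall i, b i])%:R.
Proof.
case: (boolP [forall i, b i]) => [/forallP H|/forallPn [i Hi]].
  by rewrite big1 // => i _; rewrite H.
by rewrite (bigD1 i) //= (negbTE Hi) mul0r.
Qed.

Section Stanley.
Variables (V : finType) (e : rel V) (E : {set V * V}).
Hypothesis hE : forall M (k : {ffun V -> 'I_M}),
  Defs.proper e k = [forall p in E, k p.1 != k p.2].

Definition srel (f : {ffun V * V -> bool}) : rel V := fun u v => f (u, v) || f (v, u).
Definition rt f := fingraph.root (srel f).
Definition sgn (f : {ffun V * V -> bool}) : rat := \prod_(p : V * V) (if f p then -1 else 1).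
Definition subE (f : {ffun V * V -> bool}) := [forall p, f p ==> (p \in E)].

Lemma srel_sym f : connect_sym (srel f).
Proof. by apply: sym_connect_sym => u v; rewrite /srel orbC. Qed.

Lemma rtK f v : rt f (rt f v) = rt f v.
Proof. exact: (fingraph.root_root (srel_sym f)). Qed.

Lemma const_root (f : {ffun V * V -> bool}) M (k : {ffun V -> 'I_M}) :
  [forall p, f p ==> (k p.1 == k p.2)] = [forall v, k v == k (rt f v)].
Proof.
apply/forallP/forallP => H.
  move=> v.
  have cl : closed (srel f) [pred u | k u == k v].
    move=> x y; rewrite !inE /srel => /orP[] fp; have := implyP (H _) fp => /= /eqP -> //.
  have := closed_connect cl (fingraph.connect_root (srel f) v). rewrite !inE eqxx => /esym /eqP ->. by [].
case=> u v; apply/implyP => fp /=.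
have : connect (srel f) u v by apply: connect1; rewrite /srel fp.
move/(fingraph.rootP (srel_sym f)) => Hr.
by rewrite (eqP (H u)) (eqP (H v)) /rt Hr.
Qed.

Lemma proper_expand M (k : {ffun V -> 'I_M}) :
  ((Defs.proper e k)%:R : rat) =
  \sum_(f | subE f) sgn f * ([forall p, f p ==> (k p.1 == k p.2)])%:R.
Proof.
pose a p := (p \in E) && (k p.1 == k p.2).
have -> : Defs.proper e k = [forall p, ~~ a p].
  rewrite hE; apply/forallP/forallP => H p; move: (H p); rewrite /a.
    by case: (p \in E) => //=.
  by case: (p \in E) => //=.
rewrite -prod_bool.
transitivity (\prod_(p : V * V) \sum_(b : bool) (if b then - (a p)%:R else 1 : rat)).
  by apply: eq_bigr => p _; rewrite big_bool /=; case: (a p); rewrite ?subrr ?addr0 ?subr0 //=; rewrite addrC subrr.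
rewrite bigA_distr_bigA /= (bigID subE) /= [X in _ + X]big1 ?addr0.
  apply: eq_bigr => f sf.
  rewrite /sgn -prod_bool -big_split /=; apply: eq_bigr => p _.
  move/forallP: sf => /(_ p); rewrite /a.
  by case: (f p) => //= ->; rewrite mulN1r.
move=> f /forallPn [p]; rewrite negb_imply => /andP [fp pE].
by rewrite (bigD1 p) //= fp /a (negbTE pE) /= oppr0 mul0r.
Qed.

Theorem stanley (w : V -> nat) M :
  chromX e w M = \sum_(f | subE f) sgn f *:
     \prod_(r : Rt (rt f)) pw M (\sum_(v | rt f v == val r) w v).
Proof.
rewrite /chromX; symmetry.
under eq_bigr => f _ do rewrite -(Gsum (rtK f)) big_mkcond scaler_sumr.
rewrite exchange_big /= [RHS]big_mkcond /=.
apply: eq_bigr => k _.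
transitivity (\sum_(f | subE f) (sgn f * ([forall p, f p ==> (k p.1 == k p.2)])%:R) *: \prod_v 'X_(k v) ^+ w v).
  apply: eq_bigr => f _; rewrite -const_root; case: ifP => _; rewrite ?mulr1 ?mulr0 ?scale0r ?scaler0 //.
rewrite -scaler_suml -proper_expand; case: (Defs.proper e k); rewrite ?scale1r ?scale0r //.
Qed.
End Stanley.


Definition ev (M t : nat) : 'I_M -> rat := fun i => ((i < t)%N)%:R.

Lemma ev_pw M m t : (0 < m)%N -> (t <= M)%N -> (pw M m).@[@ev M t] = t%:R.
Proof.
move=> m0 tM; rewrite /pw raddf_sum /=.
under eq_bigr => i _ do rewrite rmorphXn /= mevalXU /ev -natrX.
rewrite -natr_sum; congr (_%:R).
transitivity (\sum_(i < M | (i < t)%N) 1)%N.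
  rewrite [RHS]big_mkcond /=; apply: eq_bigr => i _; case: (i < t)%N => //.
  - exact: exp1n.
  - by rewrite exp0n.
rewrite -(big_ord_widen_cond M xpredT (fun _ => 1%N) tM) /=.
by rewrite sum1_card card_ord.
Qed.

Definition chromP (V : finType) (E : {set V * V}) : {poly rat} :=
  \sum_(f | subE E f) sgn f *: 'X^#|[pred r | rt f r == r]|.

Lemma W_pos (V : finType) (w : V -> nat) (hw : forall v, (0 < w v)%N)
  (f : {ffun V * V -> bool}) (r : Rt (rt f)) :
  (0 < \sum_(v | rt f v == val r) w v)%N.
Proof.
rewrite (bigD1 (val r)) /=; last exact: (valP r).
by rewrite ltn_addr.
Qed.

Lemma ev_chrom (V : finType) (e : rel V) (E : {set V * V})
  (hE : forall M (k : {ffun V -> 'I_M}), Defs.proper e k = [forall p in E, k p.1 != k p.2])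
  (w : V -> nat) (hw : forall v, (0 < w v)%N) M t :
  (t <= M)%N -> (chromX e w M).@[@ev M t] = (chromP E).[t%:R].
Proof.
move=> tM; rewrite (stanley hE) (big_morph (meval (@ev M t)) (mevalD _) (meval0 _)) /chromP horner_sum.
apply: eq_bigr => f _.
rewrite mevalZ hornerZ (big_morph (meval (@ev M t)) (mevalM _) (meval1 _)) hornerXn; congr (_ * _).
under eq_bigr => r _ do rewrite ev_pw ?W_pos //.
by rewrite prodr_const -card_sig cardT.
Qed.


Lemma chromP_coef (V : finType) (E : {set V * V}) j :
  (chromP E)`_j = \sum_(f | subE E f) sgn f * (j == #|[pred r | rt f r == r]|)%:R.
Proof.
rewrite /chromP coef_sum; apply: eq_bigr => f _; by rewrite coefZ coefXn.
Qed.

Lemma chromP_size (V : finType) (E : {set V * V}) : (size (chromP E) <= #|V|.+1)%N.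
Proof.
apply/leq_sizeP => j hj; rewrite chromP_coef big1 // => f _.
case: eqP => [hc|_]; last by rewrite mulr0.
by have := max_card [pred r | rt f r == r]; rewrite -hc leqNgt hj.
Qed.

Lemma rt_false (V : finType) (r : V) : rt [ffun=> false] r = r.
Proof.
have := fingraph.connect_root (srel [ffun=> false]) r.
rewrite /rt; case/connectP => p; case: p => [|y p] /=; first by move=> _ ->.
by rewrite /srel !ffunE.
Qed.

Lemma all_card (V : finType) (P : pred V) : (forall r, P r) -> #|P| = #|V|.
Proof. by move=> H; rewrite cardT -(eq_cardT (A := P)). Qed.

Lemma chromP_lead (V : finType) (E : {set V * V})
  (hE : forall p, p \in E -> p.1 != p.2) : (chromP E)`_#|V| = 1.
Proof.
rewrite chromP_coef (bigD1 [ffun => false]) /=; last first.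
  by apply/forallP => p; rewrite ffunE.
rewrite big1 ?addr0.
  rewrite /sgn big1 ?mul1r; last by move=> p _; rewrite ffunE.
  by rewrite (@all_card _ [pred r | rt [ffun=> false] r == r]) ?eqxx // => r /=; rewrite rt_false.
move=> f /andP [sf nf]; case: eqP => [hc|_]; last by rewrite mulr0.
exfalso.
have allr : forall r, rt f r == r.
  have H : [pred r | rt f r == r] =i predT.
    apply/(subset_cardP _)/subset_predT.
    by rewrite -hc (@all_card _ predT).
  by move=> r; have := H r; rewrite !inE.
have [p fp] : exists p, f p.
  apply/existsP; apply: contraR nf => /existsPn H.
  by apply/eqP/ffunP => p; rewrite ffunE; apply/negbTE/H.
have pE := implyP (forallP sf p) fp.
have : connect (srel f) p.1 p.2 by apply: connect1; rewrite /srel -surjective_pairing fp.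
move/(fingraph.rootP (srel_sym f)).
by rewrite -/(rt f _) -/(rt f _) (eqP (allr _)) (eqP (allr _)) => /eqP; rewrite (negbTE (hE _ pE)).
Qed.


Lemma chromX_iso (V1 V2 : finType) (e1 : rel V1) (e2 : rel V2) (w1 : V1 -> nat) (w2 : V2 -> nat)
  (h : V1 -> V2) (hb : bijective h)
  (he : forall u v, e2 (h u) (h v) = e1 u v) (hw : forall v, w2 (h v) = w1 v) M :
  chromX e1 w1 M = chromX e2 w2 M.
Proof.
case: hb => h' hK h'K.
pose phi (k1 : {ffun V1 -> 'I_M}) : {ffun V2 -> 'I_M} := [ffun v2 => k1 (h' v2)].
have phib : bijective phi.
  exists (fun k2 : {ffun V2 -> 'I_M} => [ffun v1 => k2 (h v1)]).
    by move=> k1; apply/ffunP => v; rewrite !ffunE hK.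
  by move=> k2; apply/ffunP => v; rewrite !ffunE h'K.
rewrite /chromX (reindex phi) /=; last exact: onW_bij.
apply: eq_big => k1.
  apply/forallP/forallP => H u.
    apply/forallP => v; apply/implyP => euv.
    have := implyP (forallP (H (h' u)) (h' v)); rewrite -he !h'K !ffunE; exact.
  apply/forallP => v; apply/implyP => euv.
  have := implyP (forallP (H (h u)) (h v)); rewrite he !ffunE !hK; exact.
move=> _; rewrite (reindex h) /=; last by apply: onW_bij; exists h'.
by apply: eq_bigr => v _; rewrite ffunE hK hw.
Qed.

Definition sumrel (V1 V2 : finType) (e1 : rel V1) (e2 : rel V2) : rel (V1 + V2) :=
  fun x y => match x, y with
             | inl a, inl b => e1 a b
             | inr a, inr b => e2 a b
             | _, _ => false end.
Definition sumw (V1 V2 : finType) (w1 : V1 -> nat) (w2 : V2 -> nat) (x : V1 + V2) : nat :=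
  match x with inl a => w1 a | inr b => w2 b end.

Lemma chromX_sum (V1 V2 : finType) (e1 : rel V1) (e2 : rel V2) (w1 : V1 -> nat) (w2 : V2 -> nat) M :
  chromX (sumrel e1 e2) (sumw w1 w2) M = chromX e1 w1 M * chromX e2 w2 M.
Proof.
rewrite /chromX big_distrlr /= pair_big_dep /=.
pose phi (k : {ffun V1 -> 'I_M} * {ffun V2 -> 'I_M}) : {ffun V1 + V2 -> 'I_M} :=
  [ffun x => match x with inl a => k.1 a | inr b => k.2 b end].
have phib : bijective phi.
  exists (fun k : {ffun V1 + V2 -> 'I_M} => ([ffun a => k (inl a)], [ffun b => k (inr b)])).
    by case=> k1 k2; congr (_, _); apply/ffunP => v; rewrite !ffunE.
  by move=> k; apply/ffunP; case=> v; rewrite !ffunE.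
rewrite (reindex phi) /=; last exact: onW_bij.
apply: eq_big => [[k1 k2]|[k1 k2] _].
  apply/forallP/andP => [H|[/forallP H1 /forallP H2]].
    split; apply/forallP => u; apply/forallP => v; apply/implyP => euv.
      by have := implyP (forallP (H (inl u)) (inl v)) euv; rewrite !ffunE.
    by have := implyP (forallP (H (inr u)) (inr v)) euv; rewrite !ffunE.
  case=> u; apply/forallP; case=> v; apply/implyP => //= euv; rewrite !ffunE /=.
    exact: implyP (forallP (H1 u) v) euv.
  exact: implyP (forallP (H2 u) v) euv.
by rewrite big_sumType /=; congr (_ * _); apply: eq_bigr => v _; rewrite ffunE.
Qed.

Lemma chromX_empty (V : finType) (e : rel V) (w : V -> nat) M :
  #|V| = 0%N -> chromX e w M = 1.
Proof.
move=> V0.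
have nV : V -> False by move=> v; have := card0_eq V0 v; rewrite !inE.
rewrite /chromX (big_pred1 (ffun0 V0 : {ffun V -> 'I_M})).
  by rewrite big_pred0 // => v; case: (nV v).
move=> k /=; apply/idP/eqP => [_|_].
  by apply/ffunP => v; case: (nV v).
by apply/forallP => v; case: (nV v).
Qed.


Definition prel n : rel 'I_n := fun j k => (k == j.+1 :> nat) || (j == k.+1 :> nat).
Arguments prel n : clear implicits.
Definition pathP M n : {mpoly rat[M]} := chromX (prel n) (fun _ => 1%N) M.

Lemma psums_cons n l : psums (n :: l) = 0%N :: map (addn n) (psums l).
Proof.
have H k m : [seq sumn (take i (n :: l)) | i <- iota m.+1 k] = [seq (n + sumn (take i l))%N | i <- iota m k].
  by elim: k m => //= k IH m; rewrite IH.
by rewrite /psums /= H -map_comp; congr (_ :: _ :: _); apply: eq_map.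
Qed.

Lemma psums0 l : 0%N \in psums l.
Proof. by rewrite /psums /= take0 inE. Qed.

Lemma notin_map_lt n s z : (z < n)%N -> z \notin map (addn n) s.
Proof. by move=> zn; apply/mapP => -[y _ hz]; move: zn; rewrite hz ltnNge leq_addr. Qed.

Lemma in_map_add n s z : (n + z \in map (addn n) s) = (z \in s).
Proof. by rewrite mem_map //; apply: addnI. Qed.

Lemma path_rel_cons n l (x y : 'I_n + 'I_(sumn l)) :
  @path_rel (n :: l) (unsplit x) (unsplit y) = sumrel (prel n) (@path_rel l) x y.
Proof.
rewrite /path_rel psums_cons in_cons negb_or; have := psums0 l; move: (psums l) => s s0.
case: x => [a|a]; case: y => [b|b] /=; have:= ltn_ord a; have := ltn_ord b.
- move=> hb ha; rewrite /prel; case adj: (_ || _) => //=.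
  have -> : (maxn a b == 0%N) = false by move: adj; lia.
  by rewrite notin_map_lt //; lia.
- move=> hb ha; apply/negbTE; rewrite negb_and; apply/orP.
  case adj: (_ || _) => //=; [right|by left].
  have -> : maxn a (n + b) = (n + 0)%N by move: adj; lia.
  by rewrite in_map_add s0 andbF.
- move=> hb ha; apply/negbTE; rewrite negb_and; apply/orP.
  case adj: (_ || _) => //=; [right|by left].
  have -> : maxn (n + a) b = (n + 0)%N by move: adj; lia.
  by rewrite in_map_add s0 andbF.
- move=> hb ha; rewrite /path_rel.
  have -> : maxn (n + a) (n + b) = (n + maxn a b)%N by lia.
  rewrite in_map_add.
  have -> : ((n + b == (n + a).+1) || (n + a == (n + b).+1)) = ((b == a.+1 :> nat) || (a == b.+1 :> nat)) by lia.
  case adj: (_ || _) => //=.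
  by have -> : (n + maxn a b == 0%N) = false by move: adj; lia.
Qed.

Lemma pathX_nil M : pathX M [::] = 1.
Proof. by rewrite /pathX chromX_empty // card_ord. Qed.

Lemma pathX_cons M n l : pathX M (n :: l) = pathP M n * pathX M l.
Proof.
rewrite /pathX /pathP -chromX_sum.
symmetry; apply: (chromX_iso (h := @unsplit n (sumn l))).
- by exists (@split n (sumn l)); [exact: unsplitK | exact: splitK].
- exact: path_rel_cons.
- by case.
Qed.

Lemma pathX_prod M l : pathX M l = \prod_(i <- l) pathP M i.
Proof.
elim: l => [|n l IH]; first by rewrite pathX_nil big_nil.
by rewrite pathX_cons big_cons IH.
Qed.


Definition cnt n t := (\sum_(k : {ffun 'I_n -> 'I_t} | Defs.proper (prel n) k) 1)%N.

Lemma proper_ext n t (k0 : {ffun 'I_n.+1 -> 'I_t}) (c : 'I_t) :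
  Defs.proper (prel n.+2)
    [ffun i : 'I_n.+2 => if unlift ord_max i is Some j then k0 j else c]
  = Defs.proper (prel n.+1) k0 && (c != k0 ord_max).
Proof.
apply/forallP/andP => [H|[/forallP H1 H2]].
  split.
    apply/forallP => u; apply/forallP => v; apply/implyP => euv.
    have := implyP (forallP (H (lift ord_max u)) (lift ord_max v)).
    rewrite !ffunE !liftK; apply.
    by move: euv; rewrite /prel !lift_max.
  have := implyP (forallP (H ord_max) (lift ord_max ord_max)).
  rewrite !ffunE liftK unlift_none; apply.
  by rewrite /prel lift_max /=; apply/orP; right.
move=> u; apply/forallP => v; apply/implyP.
case: (unliftP ord_max u) => [j ->|->]; case: (unliftP ord_max v) => [j' ->|->];
  rewrite !ffunE ?liftK ?unlift_none /prel ?lift_max /=.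
- by move=> euv; apply: (implyP (forallP (H1 j) j')).
- move=> hj; have jl : (nat_of_ord j < n.+1)%N := ltn_ord j.
  have jn : nat_of_ord j = n by move: hj jl; move: (nat_of_ord j) => x; lia.
  have -> : j = ord_max by apply: val_inj; rewrite /= jn.
  by rewrite eq_sym.
- move=> hj; have jl : (nat_of_ord j' < n.+1)%N := ltn_ord j'.
  have jn : nat_of_ord j' = n by move: hj jl; move: (nat_of_ord j') => x; lia.
  have -> : j' = ord_max by apply: val_inj; rewrite /= jn.
  by [].
- by move=> /orP[] /eqP; lia.
Qed.

Lemma cnt_rec n t : cnt n.+2 t = (cnt n.+1 t * t.-1)%N.
Proof.
rewrite /cnt big_distrl /=.
pose phi (p : {ffun 'I_n.+1 -> 'I_t} * 'I_t) : {ffun 'I_n.+2 -> 'I_t} :=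
  [ffun i => if unlift ord_max i is Some j then p.1 j else p.2].
have phib : bijective phi.
  exists (fun k : {ffun 'I_n.+2 -> 'I_t} => ([ffun j => k (lift ord_max j)], k ord_max)).
    case=> k0 c; congr (_, _); first by apply/ffunP => j; rewrite !ffunE liftK.
    by rewrite ffunE unlift_none.
  move=> k; apply/ffunP => i; rewrite !ffunE.
  by case: (unliftP ord_max i) => [j ->|->]; rewrite ?ffunE.
rewrite (reindex phi) /=; last exact: onW_bij.
under eq_bigl => p do rewrite proper_ext.
rewrite -(pair_big_dep xpredT (fun k0 c => Defs.proper (prel n.+1) k0 && (c != k0 ord_max)) (fun _ _ => 1%N)) /=.
rewrite [RHS]big_mkcond [LHS]big_mkcond /=; apply: eq_bigr => k0 _.
case: (Defs.proper (prel n.+1) k0) => /=; last by rewrite big1.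
rewrite mul1n sum1_card.
have := cardC1 (k0 ord_max); rewrite card_ord => <-; by apply: eq_card => i; rewrite !inE.
Qed.


Lemma poly_eq_nat (p q : {poly rat}) m :
  (size p <= m.+1)%N -> (size q <= m.+1)%N ->
  (forall i, (i <= m)%N -> p.[i%:R] = q.[i%:R]) -> p = q.
Proof.
move=> sp sq H; apply/eqP; rewrite -subr_eq0; apply/negPn/negP => nz.
have rsu : uniq [seq (i%:R : rat) | i <- iota 0 m.+1].
  rewrite map_inj_uniq ?iota_uniq // => a b /eqP; rewrite Num.Theory.eqr_nat => /eqP.
  exact.
have rsr : all (root (p - q)) [seq (i%:R : rat) | i <- iota 0 m.+1].
  apply/allP => x /mapP [i]; rewrite mem_iota add0n => /andP [_ hi] ->.
  by rewrite rootE hornerD hornerN H // subrr.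
have := max_poly_roots nz rsr rsu; rewrite size_map size_iota.
have : (size (p - q)%R <= m.+1)%N.
  by apply: leq_trans (size_add _ _) _; rewrite size_opp geq_max sp sq.
by move=> h1 h2; have := leq_trans h2 h1; rewrite ltnn.
Qed.

Lemma cnt1 t : cnt 1 t = t.
Proof.
rewrite /cnt (eq_bigl xpredT) ?sum1_card ?card_ffun ?card_ord ?expn1 //.
move=> k; apply/forallP => u; apply/forallP => v; apply/implyP.
by rewrite /prel !ord1.
Qed.

Lemma cnt_formula n t : cnt n.+1 t = (t * t.-1 ^ n)%N.
Proof.
elim: n => [|n IH]; first by rewrite cnt1 muln1.
rewrite cnt_rec IH expnS. by rewrite -mulnA [(t.-1 * _)%N]mulnC.
Qed.

Definition Epath n : {set 'I_n * 'I_n} := [set p : 'I_n * 'I_n | nat_of_ord p.2 == (nat_of_ord p.1).+1].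

Lemma hE_path n M (k : {ffun 'I_n -> 'I_M}) :
  Defs.proper (prel n) k = [forall p in Epath n, k p.1 != k p.2].
Proof.
apply/forallP/forallP => [H [u v]|H u]; rewrite ?inE /=.
  by apply/implyP => huv; apply: (implyP (forallP (H u) v)); rewrite /prel huv.
apply/forallP => v; apply/implyP; rewrite /prel => /orP [] h.
  by have := H (u, v); rewrite inE /= h.
by have := H (v, u); rewrite inE /= h eq_sym.
Qed.

Lemma ev_ones (V : finType) (e : rel V) (w : V -> nat) t :
  (chromX e w t).@[@ev t t] = (\sum_(k : {ffun V -> 'I_t} | Defs.proper e k) 1)%:R.
Proof.
rewrite /chromX (big_morph (meval (@ev t t)) (mevalD _) (meval0 _)) natr_sum.
apply: eq_bigr => k _.
rewrite (big_morph (meval (@ev t t)) (mevalM _) (meval1 _)) big1 // => v _.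
by rewrite rmorphXn /= mevalXU /ev ltn_ord expr1n.
Qed.

Lemma chromP_path n : chromP (Epath n.+1) = 'X * ('X - 1) ^+ n.
Proof.
apply: (@poly_eq_nat _ _ (n.+1 + n.+1)).
- by apply: leq_trans (chromP_size _) _; rewrite card_ord; lia.
- have h1 := size_mul_leq ('X : {poly rat}) (('X - 1) ^+ n).
  have h2 := size_exp_leq ('X - 1 : {poly rat}) n.
  rewrite -polyC1 size_XsubC in h2; rewrite size_polyX -polyC1 in h1.
  by apply: leq_trans h1 _; move: h2; move: (size _) => z; lia.
move=> t _.
rewrite -(ev_chrom (@hE_path n.+1) (w := fun _ => 1%N) (fun _ => isT) (leqnn t)) ev_ones.
rewrite -/(cnt n.+1 t) cnt_formula hornerM hornerX horner_exp hornerD hornerN hornerX hornerC natrM natrX.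
by case: t => [|t]; rewrite ?mul0r //= -natr1 addrK.
Qed.


Lemma poly_eq_seq (p q : {poly rat}) (rs : seq rat) :
  uniq rs -> (size p <= size rs)%N -> (size q <= size rs)%N ->
  {in rs, forall x, p.[x] = q.[x]} -> p = q.
Proof.
move=> rsu sp sq H; apply/eqP; rewrite -subr_eq0; apply/negPn/negP => nz.
have rsr : all (root (p - q)) rs.
  by apply/allP => x xr; rewrite rootE hornerD hornerN H // subrr.
have := max_poly_roots nz rsr rsu.
have : (size (p - q)%R <= size rs)%N.
  by apply: leq_trans (size_add _ _) _; rewrite size_opp geq_max sp sq.
by move=> h1 h2; have := leq_trans h2 h1; rewrite ltnn.
Qed.

Lemma size_sum_le (I : Type) (r : seq I) (F : I -> {poly rat}) m :
  (forall i, (size (F i) <= m)%N) -> (size (\sum_(i <- r) F i)%R <= m)%N.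
Proof.
move=> H; apply: (big_ind (fun p : {poly rat} => (size p <= m)%N)) => //.
  by rewrite size_poly0.
by move=> p q hp hq; apply: leq_trans (size_add _ _) _; rewrite geq_max hp hq.
Qed.

Definition Hd (d : nat) (R : {poly rat}) : {poly rat} :=
  \sum_(j < d.+1) R`_j *: ('X^j * ('X - 1) ^+ (d - j)).

Lemma size_XXm (j m : nat) : (size ('X^j * ('X - 1) ^+ m : {poly rat})%R <= (j + m).+1)%N.
Proof.
have h1 := size_mul_leq ('X^j : {poly rat}) (('X - 1) ^+ m).
have h2 := size_exp_leq ('X - 1 : {poly rat}) m.
rewrite -polyC1 size_XsubC in h2; rewrite size_polyXn -polyC1 in h1.
by apply: leq_trans h1 _; move: h2; move: (size _) => z; lia.
Qed.

Lemma Hd_size d R : (size (Hd d R) <= d.+1)%N.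
Proof.
apply: size_sum_le => j.
apply: leq_trans (size_scale_leq _ _) _.
apply: leq_trans (size_XXm _ _) _.
have := ltn_ord j; move: (nat_of_ord j) => z; lia.
Qed.

Lemma Hd_eval d (R : {poly rat}) (x : rat) : (size R <= d.+1)%N -> x != 1 ->
  (Hd d R).[x] = (x - 1) ^+ d * R.[x / (x - 1)].
Proof.
move=> sR x1; rewrite (horner_coef_wide _ sR) mulr_sumr /Hd horner_sum.
apply: eq_bigr => j _.
have x1' : x - 1 != 0 by rewrite subr_eq0.
rewrite hornerZ hornerM hornerXn horner_exp hornerD hornerN hornerX hornerC.
have jd : (j <= d)%N by have := ltn_ord j; lia.
rewrite expr_div_n; have -> : (x - 1) ^+ d = (x - 1) ^+ (d - j) * (x - 1) ^+ j by rewrite -exprD subnK.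
have hj : (x - 1) ^+ j != 0 by rewrite expf_neq0.
by field.
Qed.


Lemma prod_path_eval (x : rat) (l : seq nat) : x != 1 -> all (fun i => 0 < i)%N l ->
  (x - 1) ^+ (sumn l) * \prod_(i <- l) ('X * ('X - 1) ^+ i.-1).[x / (x - 1)] = x ^+ size l.
Proof.
move=> x1; have x1' : x - 1 != 0 by rewrite subr_eq0.
elim: l => [|i l IH] /=; first by rewrite big_nil mulr1 expr0.
case/andP => i0 /IH {}IH; rewrite big_cons exprD exprS -IH.
case: i i0 => // i _ /=.
rewrite hornerM hornerX horner_exp hornerD hornerN hornerX hornerC.
set y := x / (x - 1).
have e1 : (x - 1) * y = x by rewrite /y; field.
have e2 : (x - 1) * (y - 1) = 1 by rewrite /y; field.
transitivity (((x - 1) * y) * ((x - 1) * (y - 1)) ^+ i *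
  ((x - 1) ^+ sumn l * \prod_(j <- l) ('X * ('X - 1) ^+ j.-1).[y])).
  by rewrite exprMn exprS; ring.
by rewrite e1 e2 expr1n mulr1.
Qed.

Lemma size_path_prod (l : seq nat) : all (fun i => 0 < i)%N l ->
  (size (\prod_(i <- l) ('X * ('X - 1) ^+ i.-1) : {poly rat})%R <= (sumn l).+1)%N.
Proof.
elim: l => [|i l IH] /=; first by rewrite big_nil size_poly1.
case/andP => i0 /IH {}IH; rewrite big_cons.
apply: leq_trans (size_mul_leq _ _) _.
have := size_XXm 1 i.-1; rewrite expr1 => h.
move: h IH; move: (size _) (size _) => a b; lia.
Qed.

Lemma part_pos d l : is_partition d l -> all (fun i => 0 < i)%N l.
Proof. by case/andP => /andP []. Qed.

Lemma part_sum d l : is_partition d l -> sumn l = d.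
Proof. by case/andP => _ /eqP. Qed.

Lemma part_size d l : is_partition d l -> (size l <= d)%N.
Proof.
move=> h; rewrite -(part_sum h); have := part_pos h.
elim: l {h} => //= i l IH /andP [i0 /IH]; lia.
Qed.

Lemma pathX_eval M l t : (t <= M)%N -> all (fun i => 0 < i)%N l ->
  (pathX M l).@[@ev M t] = (\prod_(i <- l) ('X * ('X - 1) ^+ i.-1)).[t%:R].
Proof.
move=> tM; rewrite pathX_prod (big_morph (meval (@ev M t)) (mevalM _) (meval1 _)).
rewrite horner_prod; elim: l => [|i l IH] /=; first by rewrite !big_nil.
case/andP => i0 /IH {}IH; rewrite !big_cons IH; congr (_ * _).
case: i i0 => // i _.
by rewrite /pathP (ev_chrom (@hE_path i.+1) (w := fun _ => 1%N) (fun _ => isT) tM) chromP_path.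
Qed.

Lemma tau_val d (f : {mpoly rat[d]}) c (C : {poly rat}) :
  path_expansion f c -> (size C <= d.+1)%N ->
  (forall t, (t <= d)%N -> f.@[@ev d t] = C.[t%:R]) ->
  \sum_(p <- c) p.2 *: 'X^(size p.1) = Hd d C.
Proof.
case=> hpart hf sC hev.
have hp : forall p, p \in c -> is_partition d p.1.
  by move=> p pc; apply: (allP hpart); apply: map_f.
pose R := \sum_(p <- c) p.2 *: \prod_(i <- p.1) ('X * ('X - 1) ^+ i.-1).
have sR : (size R <= d.+1)%N.
  rewrite /R big_seq; apply: (big_ind (fun p : {poly rat} => (size p <= d.+1)%N)) => //.
  - by rewrite size_poly0.
  - by move=> p q hp1 hq; apply: leq_trans (size_add _ _) _; rewrite geq_max hp1 hq.
  move=> p pc; apply: leq_trans (size_scale_leq _ _) _.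
  by have := size_path_prod (part_pos (hp p pc)); rewrite (part_sum (hp p pc)).
have RC : R = C.
  apply: (poly_eq_nat sR sC) => t td; rewrite -hev // hf.
  rewrite (big_morph (meval (@ev d t)) (mevalD _) (meval0 _)) /R horner_sum.
  rewrite big_seq [RHS]big_seq; apply: eq_bigr => p pc.
  by rewrite mevalZ hornerZ pathX_eval // (part_pos (hp p pc)).
rewrite -RC.
pose rs := [seq (i.+2)%:R : rat | i <- iota 0 d.+1].
apply: (@poly_eq_seq _ _ rs).
- rewrite map_inj_uniq ?iota_uniq // => a b /eqP; rewrite Num.Theory.eqr_nat => /eqP [].
  exact.
- rewrite size_map size_iota; rewrite big_seq.
  apply: (big_ind (fun p : {poly rat} => (size p <= d.+1)%N)) => //.
  + by rewrite size_poly0.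
  + by move=> p q hp1 hq; apply: leq_trans (size_add _ _) _; rewrite geq_max hp1 hq.
  move=> p pc; apply: leq_trans (size_scale_leq _ _) _.
  by rewrite size_polyXn ltnS (part_size (hp p pc)).
- by rewrite size_map size_iota Hd_size.
move=> x /mapP [i _ ->].
have x1 : (i.+2)%:R != 1 :> rat by rewrite Num.Theory.pnatr_eq1.
rewrite Hd_eval // horner_sum /R horner_sum mulr_sumr.
rewrite big_seq [RHS]big_seq; apply: eq_bigr => p pc.
rewrite hornerZ hornerXn hornerZ mulrCA; congr (_ * _).
by rewrite -(part_sum (hp p pc)) horner_prod prod_path_eval // (part_pos (hp p pc)).
Qed.


Definition inA M d (f : {mpoly rat[M]}) :=
  exists c, all (is_partition d) (unzip1 c) /\ f = \sum_(p <- c) p.2 *: pathX M p.1.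
Arguments inA M d f : clear implicits.

Lemma inA0 M d : inA M d 0.
Proof. by exists [::]; rewrite big_nil. Qed.

Lemma inAD M d f g : inA M d f -> inA M d g -> inA M d (f + g).
Proof.
move=> [c1 [h1 ->]] [c2 [h2 ->]]; exists (c1 ++ c2).
by rewrite /unzip1 map_cat all_cat h1 h2 big_cat.
Qed.

Lemma inAZ M d a f : inA M d f -> inA M d (a *: f).
Proof.
move=> [c [h ->]]; exists [seq (p.1, a * p.2) | p <- c]; split.
  by rewrite /unzip1 -map_comp.
by rewrite big_map scaler_sumr; apply: eq_bigr => p _; rewrite scalerA.
Qed.

Lemma inA_sum M d (I : eqType) (r : seq I) (F : I -> {mpoly rat[M]}) :
  (forall i, i \in r -> inA M d (F i)) -> inA M d (\sum_(i <- r) F i).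
Proof.
move=> H; rewrite big_seq; apply: (big_ind (inA M d)) => //.
- exact: inA0.
- exact: inAD.
Qed.

Lemma inA_path M d l : is_partition d l -> inA M d (pathX M l).
Proof. by move=> h; exists [:: (l, 1)]; rewrite /= h big_seq1 scale1r. Qed.

Lemma pathX_perm M l l' : perm_eq l l' -> pathX M l = pathX M l'.
Proof. by move=> h; rewrite !pathX_prod (perm_big _ h). Qed.

Lemma pathX_cat M l l' : pathX M (l ++ l') = pathX M l * pathX M l'.
Proof. by rewrite !pathX_prod big_cat. Qed.

Lemma part_cat a b l l' : is_partition a l -> is_partition b l' ->
  is_partition (a + b) (sort geq (l ++ l')).
Proof.
move=> h h'; have pp : perm_eq (sort geq (l ++ l')) (l ++ l') := permEl (perm_sort _ _).
apply/andP; split; first (apply/andP; split).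
- by apply: sort_sorted => x y; apply: leq_total.
- by rewrite (perm_all _ pp) all_cat (part_pos h) (part_pos h').
by rewrite (perm_sumn pp) sumn_cat (part_sum h) (part_sum h').
Qed.

Lemma inAM M a b f g : inA M a f -> inA M b g -> inA M (a + b) (f * g).
Proof.
move=> [c1 [h1 ->]] [c2 [h2 ->]]; rewrite big_distrlr /=.
apply: inA_sum => p1 p1c; apply: inA_sum => p2 p2c.
rewrite -scalerAl -scalerAr scalerA; apply: inAZ.
rewrite -pathX_cat -(@pathX_perm M _ _ (permEl (perm_sort geq _))).
apply: inA_path; apply: part_cat.
  exact: (allP h1 _ (map_f _ p1c)).
exact: (allP h2 _ (map_f _ p2c)).
Qed.

Lemma inA1 M : inA M 0 1.
Proof. by rewrite -(pathX_nil M); apply: inA_path. Qed.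

Lemma inA_prod M (I : finType) (P : pred I) (W : I -> nat) :
  (forall i, P i -> inA M (W i) (pw M (W i))) ->
  inA M (\sum_(i | P i) W i) (\prod_(i | P i) pw M (W i)).
Proof.
move=> H.
apply: (big_ind2 (fun f d => inA M d f)) => //.
- exact: inA1.
- by move=> f1 d1 f2 d2 hf1 hf2; apply: inAM.
Qed.


Lemma sumW (V : finType) (rho : V -> V) (rhoK : forall v, rho (rho v) = rho v) (w : V -> nat) :
  (\sum_(r : Rt rho) \sum_(v | rho v == val r) w v)%N = (\sum_v w v)%N.
Proof.
rewrite [RHS](partition_big (rhoS rhoK) xpredT) //=.
Qed.

Lemma card_lt (T : finType) (P : pred T) x : ~~ P x -> (#|P| < #|T|)%N.
Proof.
move=> nPx; rewrite -(cardC P).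
have : (0 < #|[predC P]|)%N by apply/card_gt0P; exists x; rewrite inE.
lia.
Qed.

Lemma sgn_sq (V : finType) (f : {ffun V * V -> bool}) : sgn f * sgn f = 1.
Proof.
rewrite /sgn -big_split /=; apply: big1 => p _.
by case: (f p); rewrite ?mulrNN mulr1.
Qed.

Lemma inA_pw M n : (0 < n)%N -> inA M n (pw M n).
Proof.
elim/ltn_ind: n => n IH n0.
case: n n0 IH => // n _ IH.
have st := stanley (@hE_path n.+1) (fun _ => 1%N) M.
pose full : {ffun 'I_n.+1 * 'I_n.+1 -> bool} := [ffun p => p \in Epath n.+1].
have sfull : subE (Epath n.+1) full by apply/forallP => p; rewrite ffunE; apply/implyP.
rewrite (bigD1 full) //= in st.
have conn0 : forall m (hm : (m < n.+1)%N), connect (srel full) ord0 (Ordinal hm).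
  elim => [hm|m IHm hm].
    by have -> : Ordinal hm = ord0 by apply: val_inj.
  apply: (connect_trans (IHm (ltnW hm))); apply: connect1.
  by rewrite /srel ffunE inE /= eqxx.
have conn : forall v : 'I_n.+1, rt full v = rt full ord0.
  move=> v; apply/esym/(fingraph.rootP (srel_sym full)).
  by have := conn0 v (ltn_ord v); rewrite (_ : Ordinal _ = v) //; apply: val_inj.
have Wfull : \prod_(r : Rt (rt full)) pw M (\sum_(v | rt full v == val r) 1%N) = pw M n.+1.
  rewrite (big_pred1 (rhoS (@rtK _ full) ord0)).
    congr (pw M _); rewrite /= (eq_bigl xpredT) ?sum1_card ?card_ord //.
    by move=> v; rewrite conn eqxx.
  move=> r; apply/esym/eqP/val_inj => /=.
  by rewrite -(eqP (valP r)) conn.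
have hrest : inA M n.+1 (\sum_(f | subE (Epath n.+1) f && (f != full)) sgn f *:
     \prod_(r : Rt (rt f)) pw M (\sum_(v | rt f v == val r) 1%N)).
  apply: (big_ind (inA M n.+1)); [exact: inA0 | exact: inAD |].
  move=> f /andP [sf nf]; apply: inAZ.
  have e : (\sum_(r : Rt (rt f)) \sum_(v | rt f v == val r) 1)%N = n.+1.
    by rewrite (sumW (@rtK _ f)) sum1_card card_ord.
  rewrite -{1}e.
  apply: inA_prod => r _; apply: IH; last exact: (@W_pos _ (fun _ => 1%N) (fun _ => isT)).
  have [p hp] : exists p, f p != full p.
    apply/existsP; apply: contraR nf => /existsPn H.
    by apply/eqP/ffunP => p; apply/eqP; have := H p; rewrite negbK.
  have fp : f p = false.
    apply/negbTE/negP => fpt; move: hp; rewrite fpt ffunE (implyP (forallP sf p) fpt).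
    by [].
  have pE : p \in Epath n.+1 by move: hp; rewrite fp ffunE; case: (_ \in _).
  have p2 : nat_of_ord p.2 = (nat_of_ord p.1).+1 by move: pE; rewrite inE => /eqP.
  pose A := [pred v : 'I_n.+1 | (nat_of_ord v <= p.1)%N].
  have cl : closed (srel f) A.
    have key : forall x y : 'I_n.+1, f (x, y) -> (x \in A) = (y \in A).
      move=> x y fxy; have := implyP (forallP sf _) fxy; rewrite inE /= => /eqP hy.
      have xj : nat_of_ord x != p.1.
        apply/negP => /eqP hx; suff : (x, y) = p by move=> E; move: fxy; rewrite E fp.
        by case: p {hp fp pE A} p2 hx hy => a b /= h2 hx hy; congr (_, _); apply: val_inj => //=; rewrite hy h2 hx.
      by rewrite !inE hy; move: xj; lia.
    move=> x y; rewrite /srel => /orP [] h; first exact: key.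
    by rewrite (key _ _ h).
  rewrite sum1_card -[X in (_ < X)%N](card_ord n.+1).
  case: (boolP (rt f p.1 == val r)) => h1; last by apply: (card_lt (x := p.1)).
  apply: (card_lt (x := p.2)); apply/negP => h2.
  have h2' : rt f p.2 = val r by apply/eqP.
  have : connect (srel f) p.1 p.2.
    by apply/(fingraph.rootP (srel_sym f)); rewrite -/(rt f _) -/(rt f _) (eqP h1) h2'.
  move/(closed_connect cl); rewrite !inE p2 leqnn ltnn.
  by [].
have hpath : inA M n.+1 (pathP M n.+1).
  rewrite -[pathP M n.+1]mulr1 -(pathX_nil M) -pathX_cons; apply: inA_path.
  by rewrite /is_partition /= addn0 eqxx.
rewrite Wfull in st.
have -> : pw M n.+1 = sgn full *: (pathP M n.+1 - \sum_(f | subE (Epath n.+1) f && (f != full)) sgn f *: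
     \prod_(r : Rt (rt f)) pw M (\sum_(v | rt f v == val r) 1%N)).
  by rewrite /pathP st addrK scalerA sgn_sq scale1r.
apply: inAZ; apply: inAD => //.
by rewrite -scaleN1r; apply: inAZ.
Qed.


Definition Egraph (V : finType) (e : rel V) : {set V * V} :=
  [set p : V * V | e p.1 p.2 && (enum_rank p.1 < enum_rank p.2)%N].

Lemma hE_graph (V : finType) (e : rel V) : simple_graph e ->
  forall M (k : {ffun V -> 'I_M}), Defs.proper e k = [forall p in Egraph e, k p.1 != k p.2].
Proof.
case=> esym eirr M k.
apply/forallP/forallP => [H [u v]|H u]; rewrite ?inE /=.
  by apply/implyP => /andP [euv _]; apply: (implyP (forallP (H u) v)).
apply/forallP => v; apply/implyP => euv.
case: (ltngtP (enum_rank u) (enum_rank v)) => h.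
- by have := H (u, v); rewrite inE /= euv h.
- by have := H (v, u); rewrite inE /= -esym euv h eq_sym.
- by move: euv; rewrite (enum_rank_inj (val_inj h)) eirr.
Qed.

Lemma Egraph_nl (V : finType) (e : rel V) p : p \in Egraph e -> p.1 != p.2.
Proof. by rewrite inE => /andP [_ h]; apply/eqP => E; move: h; rewrite E ltnn. Qed.

Lemma inA_chrom (V : finType) (e : rel V) (w : V -> nat) M :
  simple_graph e -> (forall v, (0 < w v)%N) -> inA M (\sum_v w v) (chromX e w M).
Proof.
move=> sg hw; rewrite (stanley (hE_graph sg)).
apply: (big_ind (inA M _)); [exact: inA0 | exact: inAD |].
move=> f _; apply: inAZ.
rewrite -(sumW (@rtK _ f)); apply: inA_prod => r _; apply: inA_pw.
exact: W_pos.
Qed.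

Lemma tau_eq d (f : {mpoly rat[d]}) (C : {poly rat}) :
  inA d d f -> (size C <= d.+1)%N ->
  (forall t, (t <= d)%N -> f.@[@ev d t] = C.[t%:R]) -> tau f = Hd d C.
Proof.
move=> hA sC hev; rewrite /tau; case: excluded_middle_informative => [h|h]; last by [].
exact: (tau_val (proj2_sig (constructive_indefinite_description _ h)) sC hev).
Qed.

Lemma Hd_shift (C : {poly rat}) n N : (size C <= n.+1)%N -> (n <= N)%N ->
  Hd N C = ('X - 1) ^+ (N - n) * Hd n C.
Proof.
move=> sC nN.
pose rs := [seq (i.+2)%:R : rat | i <- iota 0 N.+1].
apply: (@poly_eq_seq _ _ rs).
- rewrite map_inj_uniq ?iota_uniq // => a b /eqP; rewrite Num.Theory.eqr_nat => /eqP [].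
  exact.
- by rewrite size_map size_iota Hd_size.
- rewrite size_map size_iota; apply: leq_trans (size_mul_leq _ _) _.
  have h1 := size_exp_leq ('X - 1 : {poly rat}) (N - n).
  rewrite -polyC1 size_XsubC in h1; have h2 := Hd_size n C.
  by move: h1 h2; rewrite polyC1; move: (size _) (size _) => a b; lia.
move=> x /mapP [i _ ->].
have x1 : (i.+2)%:R != 1 :> rat by rewrite Num.Theory.pnatr_eq1.
rewrite hornerM horner_exp hornerD hornerN hornerX hornerC !Hd_eval //; last first.
  by apply: leq_trans sC _.
by rewrite mulrA -exprD subnK.
Qed.

Lemma Hd_at1 n (C : {poly rat}) : (Hd n C).[1] = C`_n.
Proof.
rewrite /Hd horner_sum big_ord_recr /= big1 ?add0r.
  by rewrite hornerZ hornerM hornerXn horner_exp hornerD hornerN hornerX hornerC subrr subnn !expr0 expr1n mulr1 mulr1.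
move=> j _; rewrite hornerZ hornerM hornerXn horner_exp hornerD hornerN hornerX hornerC subrr.
by rewrite expr0n subn_eq0 leqNgt ltn_ord /= mulr0 mulr0.
Qed.


Theorem theorem4p1 (V : finType) (e : rel V) (w : V -> nat) :
  simple_graph e -> (forall v, (0 < w v)%N) ->
  [/\ tau_w e w = ('X - 1) ^+ (total_weight w - #|V|) * tau_G e,
      (tau_G e).[1] != 0
    & forall k : nat, (('X - 1) ^+ k %| tau_w e w) = (k <= total_weight w - #|V|)%N].
Proof.
move=> sg hw.
pose C := chromP (Egraph e).
have sC : (size C <= #|V|.+1)%N := chromP_size _.
have nN : (#|V| <= total_weight w)%N.
  by rewrite /total_weight -sum1_card; apply: leq_sum => v _; apply: hw.
have tw : tau_w e w = Hd (total_weight w) C.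
  rewrite /tau_w; apply: tau_eq.
  - exact: inA_chrom sg hw.
  - by apply: leq_trans sC _; rewrite ltnS.
  - by move=> t tN; apply: (ev_chrom (hE_graph sg) hw tN).
have tg : tau_G e = Hd #|V| C.
  rewrite /tau_G; apply: tau_eq => //.
  - have := inA_chrom #|V| sg (w := fun _ => 1%N) (fun _ => isT).
    by rewrite sum1_card.
  - by move=> t tN; apply: (ev_chrom (hE_graph sg) (w := fun _ => 1%N) (fun _ => isT) tN).
have lead : (tau_G e).[1] != 0.
  by rewrite tg Hd_at1 chromP_lead ?oner_neq0 //; exact: Egraph_nl.
have X1 : ('X - 1 : {poly rat}) != 0 by rewrite -polyC1 polyXsubC_eq0.
split.
- by rewrite tw tg; exact: Hd_shift.
- exact: lead.
move=> k; rewrite tw (Hd_shift sC nN) -tg; apply/idP/idP.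
  move=> hd; rewrite leqNgt; apply/negP => hk.
  have : ('X - 1) ^+ (total_weight w - #|V|) * ('X - 1) %| ('X - 1) ^+ (total_weight w - #|V|) * tau_G e.
    by apply: dvdp_trans hd; rewrite -exprSr; exact: dvdp_exp2l.
  rewrite dvdp_mul2l ?expf_neq0 // -polyC1 dvdp_XsubCl rootE.
  by rewrite (negbTE lead).
by move=> hk; apply: dvdp_mulr; exact: dvdp_exp2l.
Qed.
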